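(* Let $(X,d_X)$ be a metric space and $(Y,d_Y)$ a metric space with the coarse Stone property, i.e. $\Delta_Y^{(c)}(R)<\infty$ for all $R\in[0,\infty)$. If there exists a coarse embedding $f\colon X\to Y$, then $X$ has the coarse Stone property, i.e. $\Delta_X^{(c)}(R)<\infty$ for all $R\in[0,\infty)$. If $f$ is a coarse Lipschitz embedding and there are $C,D\in[0,\infty)$ such that $\Delta_Y^{(c)}(R)\leq CR+D$ for all $R\in[0,\infty)$, then there are $C',D'\in[0,\infty)$ such that $\Delta_X^{(c)}(R)<C'R+D'$ for all $R\in[0,\infty)$. If, in particular, $f$ is a bi-Lipschitz embedding and $D=0$, then $\Delta_X^{(c)}(R)\leq C\,\mathrm{dist}(f)\,R$ for all $R\in[0,\infty)$.
   Context: For a metric space $X$ and a cover $\mathcal{U}$ of $X$: $\mathrm{diam}(\mathcal{U})=\sup_{U\in\mathcal{U}}\mathrm{diam}(U)$; $\mathcal{L}(\mathcal{U})=\sup\{d\in[0,\infty): \text{every } E\subseteq X \text{ with } \mathrm{diam}(E)<d \text{ is contained in some } U\in\mathcal{U}\}$; $\mathcal{U}$ is point-finite if each point lies in only finitely many members. $\Delta_X^{(c)}(R)=\inf\{\mathrm{diam}(\mathcal{U}): \mathcal{U} \text{ a point-finite cover of } X,\ \mathcal{L}(\mathcal{U})\geq R\}$. For $f\colon X\to Y$: $\omega_f(t)=\sup\{d_Y(f(x_1),f(x_2)): d_X(x_1,x_2)\leq t\}$, $\rho_f(t)=\inf\{d_Y(f(x_1),f(x_2)): d_X(x_1,x_2)\geq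 t\}$; $f$ is a coarse embedding if $\omega_f(t)<\infty$ for all $t$ and $\lim_{t\to\infty}\rho_f(t)=\infty$; a coarse Lipschitz embedding if there are $A\geq1$, $B\geq0$ with $\omega_f(t)\leq At+B$ and $\rho_f(t)\geq t/A-B$ for all $t$; a bi-Lipschitz embedding if this holds with $B=0$. $\mathrm{Lip}(f)=\sup_{x_1\neq x_2} d_Y(f(x_1),f(x_2))/d_X(x_1,x_2)$ and for injective $f$, $\mathrm{dist}(f)=\mathrm{Lip}(f)\mathrm{Lip}(f^{-1})$. *)

(* Defs.v *)
From HB Require Import structures.
From mathcomp Require Import all_boot all_order all_algebra.
From mathcomp Require Import all_classical all_reals ereal.
Set Implicit Arguments. Unset Strict Implicit. Unset Printing Implicit Defensive.
Import Order.TTheory GRing.Theory Num.Theory.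
Local Open Scope classical_set_scope.
Local Open Scope ring_scope.

Section MetricDefs.
Context {R : realType}.

Definition is_metric {T : Type} (d : T -> T -> R) : Prop :=
  [/\ (forall x y, 0 <= d x y),
      (forall x y, d x y = 0 <-> x = y),
      (forall x y, d x y = d y x) &
      (forall x y z, d x z <= d x y + d y z)].

(* diam(E) = sup of distances, with diam(empty) = 0 *)
Definition diam {T : Type} (d : T -> T -> R) (E : set T) : \bar R :=
  ereal_sup ([set 0%E] `|`
             [set r | exists x y, [/\ E x, E y & r = (d x y)%:E]]).

(* diam(U) = sup_{U in U} diam(U)  (0 for the empty family) *)
Definition diam_cover {T : Type} (d : T -> T -> R) (U : set (set T)) : \bar R :=
  ereal_sup ([set 0%E] `|` [set diam d V | V in U]).

Definition lebesgue_number {T : Type} (d : T -> T -> R) (U : set (set T))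
  : \bar R :=
  ereal_sup [set r%:E | r in [set r : R | 0 <= r /\
     (forall E : set T, (diam d E < r%:E)%E -> exists2 V, U V & E `<=` V)]].

Definition is_cover {T : Type} (U : set (set T)) : Prop :=
  forall x : T, exists2 V, U V & V x.

Definition point_finite {T : Type} (U : set (set T)) : Prop :=
  forall x : T, finite_set [set V | U V /\ V x].

(* Delta^{(c)}_X(R0); inf of the empty set is +oo *)
Definition Delta_c {T : Type} (d : T -> T -> R) (R0 : R) : \bar R :=
  ereal_inf [set diam_cover d U | U in
    [set U | [/\ is_cover U, point_finite U & (R0%:E <= lebesgue_number d U)%E]]].

Definition coarse_stone {T : Type} (d : T -> T -> R) : Prop :=
  forall R0 : R, 0 <= R0 -> (Delta_c d R0 < +oo)%E.

Definition omega_f {X Y : Type} (dX : X -> X -> R) (dY : Y -> Y -> R)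
  (f : X -> Y) (t : R) : \bar R :=
  ereal_sup [set r | exists x1 x2, [/\ dX x1 x2 <= t & r = (dY (f x1) (f x2))%:E]].

Definition rho_f {X Y : Type} (dX : X -> X -> R) (dY : Y -> Y -> R)
  (f : X -> Y) (t : R) : \bar R :=
  ereal_inf [set r | exists x1 x2, [/\ t <= dX x1 x2 & r = (dY (f x1) (f x2))%:E]].

Definition coarse_embedding {X Y : Type} (dX : X -> X -> R) (dY : Y -> Y -> R)
  (f : X -> Y) : Prop :=
  (forall t : R, 0 <= t -> (omega_f dX dY f t < +oo)%E) /\
  (forall M : R, exists t0 : R, forall t : R, t0 <= t ->
       (M%:E <= rho_f dX dY f t)%E).

Definition coarse_lipschitz_embedding {X Y : Type} (dX : X -> X -> R)
  (dY : Y -> Y -> R) (f : X -> Y) : Prop :=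
  exists A B : R, [/\ 1 <= A, 0 <= B &
    forall t : R, 0 <= t ->
      (omega_f dX dY f t <= (A * t + B)%:E)%E /\
      ((t / A - B)%:E <= rho_f dX dY f t)%E].

Definition bilipschitz_embedding {X Y : Type} (dX : X -> X -> R)
  (dY : Y -> Y -> R) (f : X -> Y) : Prop :=
  exists A : R, 1 <= A /\
    forall t : R, 0 <= t ->
      (omega_f dX dY f t <= (A * t)%:E)%E /\
      ((t / A)%:E <= rho_f dX dY f t)%E.

(* Lip(f), with Lip = 0 when there are no two distinct points *)
Definition lip {X Y : Type} (dX : X -> X -> R) (dY : Y -> Y -> R)
  (f : X -> Y) : \bar R :=
  ereal_sup ([set 0%E] `|`
    [set r | exists x1 x2, x1 <> x2 /\ r = (dY (f x1) (f x2) / dX x1 x2)%:E]).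

(* Lip(f^{-1}) for injective f, f^{-1} : f(X) -> X *)
Definition lip_inv {X Y : Type} (dX : X -> X -> R) (dY : Y -> Y -> R)
  (f : X -> Y) : \bar R :=
  ereal_sup ([set 0%E] `|`
    [set r | exists x1 x2, x1 <> x2 /\ r = (dX x1 x2 / dY (f x1) (f x2))%:E]).

Definition distortion {X Y : Type} (dX : X -> X -> R) (dY : Y -> Y -> R)
  (f : X -> Y) : \bar R := (lip dX dY f * lip_inv dX dY f)%E.

End MetricDefs.

(* Main.v *)
Require Import Defs.
From HB Require Import structures.
From mathcomp Require Import all_boot all_order all_algebra.
From mathcomp Require Import all_classical all_reals ereal.
From mathcomp Require Import ring lra.
Import Order.TTheory GRing.Theory Num.Theory.
Local Open Scope classical_set_scope.
Local Open Scope ring_scope.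

Section Helpers.
Context {R : realType}.

Lemma diam_le {T : Type} (d : T -> T -> R) (E : set T) (c : R) :
  0 <= c -> (forall x y, E x -> E y -> d x y <= c) -> (diam d E <= c%:E)%E.
Proof.
move=> c0 H; apply/ereal_supP => y [->|[x [z [Ex Ez ->]]]].
  by rewrite lee_fin.
by rewrite lee_fin; apply: H.
Qed.

Lemma diam_ge {T : Type} (d : T -> T -> R) (E : set T) x y :
  E x -> E y -> ((d x y)%:E <= diam d E)%E.
Proof. by move=> Ex Ey; apply: ereal_sup_ubound; right; exists x, y. Qed.

Lemma diam_cover_le {T : Type} (d : T -> T -> R) (U : set (set T)) (c : R) :
  0 <= c -> (forall V, U V -> (diam d V <= c%:E)%E) -> (diam_cover d U <= c%:E)%E.
Proof.
move=> c0 H; apply/ereal_supP => y [->|[V UV <-]]; last exact: H.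
by rewrite lee_fin.
Qed.

Lemma diam_cover_ge {T : Type} (d : T -> T -> R) (U : set (set T)) V :
  U V -> (diam d V <= diam_cover d U)%E.
Proof. by move=> UV; apply: ereal_sup_ubound; right; exists V. Qed.

Lemma leb_sub {T : Type} (d : T -> T -> R) (U : set (set T)) E :
  (diam d E < lebesgue_number d U)%E -> exists2 V, U V & E `<=` V.
Proof.
move=> /ereal_sup_gt [y [r [r0 Hr] <-]] Er.
exact: Hr.
Qed.

Lemma leb_ge {T : Type} (d : T -> T -> R) (U : set (set T)) r :
  0 <= r -> (forall E, (diam d E < r%:E)%E -> exists2 V, U V & E `<=` V) ->
  (r%:E <= lebesgue_number d U)%E.
Proof. by move=> r0 H; apply: ereal_sup_ubound; exists r. Qed.

Lemma Delta_le {T : Type} (d : T -> T -> R) (U : set (set T)) R0 :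
  is_cover U -> point_finite U -> (R0%:E <= lebesgue_number d U)%E ->
  (Delta_c d R0 <= diam_cover d U)%E.
Proof. by move=> *; apply: ereal_inf_lbound; exists U. Qed.

Lemma Delta_lt {T : Type} (d : T -> T -> R) R0 x :
  (Delta_c d R0 < x)%E -> exists U, [/\ is_cover U, point_finite U,
     (R0%:E <= lebesgue_number d U)%E & (diam_cover d U < x)%E].
Proof. by move=> /ereal_inf_lt [y [U [? ? ?] <-]] ?; exists U. Qed.

Lemma pullback {X Y : Type} (dX : X -> X -> R) (dY : Y -> Y -> R) (f : X -> Y)
  (Vs : set (set Y)) (R0 T : R) :
  is_cover Vs -> point_finite Vs -> 0 <= R0 -> 0 <= T ->
  (forall E : set X, (diam dX E < R0%:E)%E ->
      (diam dY (f @` E) < lebesgue_number dY Vs)%E) ->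
  (forall V x1 x2, Vs V -> V (f x1) -> V (f x2) -> dX x1 x2 <= T) ->
  (Delta_c dX R0 <= T%:E)%E.
Proof.
move=> cV pV R00 T0 HL HD.
pose U := [set f @^-1` V | V in Vs].
apply: (le_trans (@Delta_le _ dX U R0 _ _ _)).
- move=> x; have [V VV Vx] := cV (f x); exists (f @^-1` V) => //.
  by exists V.
- move=> x; apply: (sub_finite_set (B := [set f @^-1` V | V in [set V | Vs V /\ V (f x)]])).
    by move=> W [[V VV <-] Wx]; exists V.
  exact: finite_image.
- apply: leb_ge => // E /HL /leb_sub [V VV sV].
  exists (f @^-1` V); first by exists V.
  by move=> x Ex; apply: sV; exists x.
- apply: diam_cover_le => // W [V VV <-].
  apply: diam_le => // x y; exact: HD.
Qed.


Lemma diam_cover_fin {T : Type} (d : T -> T -> R) (U : set (set T)) (x : \bar R) :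
  (diam_cover d U < x)%E -> forall V a b, U V -> V a -> V b -> ((d a b)%:E < x)%E.
Proof.
move=> H V a b UV Va Vb; apply: (le_lt_trans _ H).
exact: (le_trans (diam_ge d _ _ _ Va Vb) (diam_cover_ge d _ _ UV)).
Qed.

Lemma diam_lt {T : Type} (d : T -> T -> R) (E : set T) (r : R) a b :
  (diam d E < r%:E)%E -> E a -> E b -> d a b < r.
Proof.
by move=> H Ea Eb; rewrite -lte_fin; apply: le_lt_trans (diam_ge d _ _ _ Ea Eb) H.
Qed.

Lemma omega_bound {X Y : Type} (dX : X -> X -> R) (dY : Y -> Y -> R) (f : X -> Y) t :
  (omega_f dX dY f t < +oo)%E ->
  exists w, 0 <= w /\ forall x1 x2, dX x1 x2 <= t -> dY (f x1) (f x2) <= w.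
Proof.
move=> H.
have ub x1 x2 : dX x1 x2 <= t -> ((dY (f x1) (f x2))%:E <= omega_f dX dY f t)%E.
  by move=> h; apply: ereal_sup_ubound; exists x1, x2.
case Ew: (omega_f dX dY f t) H ub => [w| |] // _ ub.
- exists (Num.max w 0); split; first by rewrite le_max lexx orbT.
  move=> x1 x2 h; have := ub _ _ h; rewrite lee_fin => h2.
  by rewrite le_max h2.
- exists 0; split => // x1 x2 h; have := ub _ _ h.
  by rewrite leeNy_eq.
Qed.

Lemma rho_le {X Y : Type} (dX : X -> X -> R) (dY : Y -> Y -> R) (f : X -> Y) x1 x2 :
  (rho_f dX dY f (dX x1 x2) <= (dY (f x1) (f x2))%:E)%E.
Proof. by apply: ereal_inf_lbound; exists x1, x2. Qed.

Lemma omega_ge {X Y : Type} (dX : X -> X -> R) (dY : Y -> Y -> R) (f : X -> Y) x1 x2 :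
  ((dY (f x1) (f x2))%:E <= omega_f dX dY f (dX x1 x2))%E.
Proof. by apply: ereal_sup_ubound; exists x1, x2. Qed.


Lemma part1 {X Y : Type} (dX : X -> X -> R) (dY : Y -> Y -> R) (f : X -> Y) :
  coarse_stone dY -> coarse_embedding dX dY f -> coarse_stone dX.
Proof.
move=> sY [hw hr] R0 R00.
have [w [w0 Hw]] := omega_bound _ _ _ _ (hw R0 R00).
have W0 : 0 <= w + 1 by rewrite addr_ge0.
have [Vs [cV pV LV dV]] := Delta_lt _ _ _ (sY _ W0).
have dV' : 0 <= fine (diam_cover dY Vs).
  apply: fine_ge0; apply: ereal_sup_ubound; by left.
have dVf : diam_cover dY Vs \is a fin_num.
  rewrite ge0_fin_numE ?dV //; apply: ereal_sup_ubound; by left.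
set S := fine (diam_cover dY Vs).
have HS V a b : Vs V -> V a -> V b -> dY a b <= S.
  move=> UV Va Vb; rewrite -lee_fin /S fineK //.
  exact: (le_trans (diam_ge dY _ _ _ Va Vb) (diam_cover_ge dY _ _ UV)).
have [t0 Ht0] := hr (S + 1).
suff H : (Delta_c dX R0 <= (Num.max t0 0)%:E)%E by apply: le_lt_trans H _; rewrite ltry.
apply: (@pullback _ _ dX dY f Vs R0 (Num.max t0 0) cV pV R00).
- by rewrite le_max lexx orbT.
- move=> E HE; apply: (@le_lt_trans _ _ w%:E).
    apply: diam_le => // _ _ [a Ea <-] [b Eb <-]; apply: Hw.
    by apply/ltW; apply: diam_lt HE Ea Eb.
  by apply: lt_le_trans LV; rewrite lte_fin ltrDl.
- move=> V x1 x2 VV V1 V2; rewrite leNgt; apply/negP => lt.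
  have h1 : t0 <= dX x1 x2 by apply/ltW; apply: le_lt_trans lt; rewrite le_max lexx.
  have := le_trans (Ht0 _ h1) (rho_le dX dY f x1 x2).
  rewrite lee_fin => h2; have := HS _ _ _ VV V1 V2.
  by apply/negP; rewrite -ltNge; apply: lt_le_trans h2; rewrite ltrDl.
Qed.


Lemma part2 {X Y : Type} (dX : X -> X -> R) (dY : Y -> Y -> R) (f : X -> Y) (C D : R) :
  is_metric dX -> 0 <= C -> 0 <= D ->
  coarse_lipschitz_embedding dX dY f ->
  (forall R0 : R, 0 <= R0 -> (Delta_c dY R0 <= (C * R0 + D)%:E)%E) ->
  exists C' D' : R, [/\ 0 <= C', 0 <= D' &
    forall R0 : R, 0 <= R0 -> (Delta_c dX R0 < (C' * R0 + D')%:E)%E].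
Proof.
move=> [dX0 _ _ _] C0 D0 [A [B [A1 B0 HAB]]] hD.
have A0 : 0 < A by apply: lt_le_trans A1.
exists (A * A * C), (A * (C * (B + 1) + D + 1 + B) + 1); split.
- by rewrite !mulr_ge0 // ltW.
- apply: addr_ge0 => //; apply: mulr_ge0; first exact: ltW.
  by apply: addr_ge0 => //; apply: addr_ge0 => //; apply: addr_ge0 => //; apply: mulr_ge0 => //; apply: addr_ge0.
move=> R0 R00.
set W := A * R0 + B + 1.
have W0 : 0 <= W by rewrite /W !addr_ge0 // mulr_ge0 // ltW.
set S := C * W + D + 1.
have [Vs [cV pV LV dV]] : exists U, [/\ is_cover U, point_finite U,
     (W%:E <= lebesgue_number dY U)%E & (diam_cover dY U < S%:E)%E].
  apply: Delta_lt; apply: le_lt_trans (hD _ W0) _.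
  by rewrite lte_fin /S ltrDl.
have HS V a b : Vs V -> V a -> V b -> dY a b <= S.
  by move=> UV Va Vb; apply/ltW; rewrite -lte_fin; exact: (diam_cover_fin _ _ _ dV _ _ _ UV).
have S0 : 0 <= S by rewrite /S !addr_ge0 // mulr_ge0.
set T := A * (S + B).
have H : (Delta_c dX R0 <= T%:E)%E.
  apply: (@pullback _ _ dX dY f Vs R0 T cV pV R00).
  - by apply: mulr_ge0; [exact: ltW | apply: addr_ge0].
  - move=> E HE; apply: (@le_lt_trans _ _ (A * R0 + B)%:E).
      apply: diam_le; first by rewrite addr_ge0 // mulr_ge0 // ltW.
      move=> _ _ [a Ea <-] [b Eb <-].
      have hab := ltW (diam_lt _ _ _ _ _ HE Ea Eb).
      rewrite -lee_fin; apply: le_trans (omega_ge dX dY f a b) _.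
      apply: le_trans (proj1 (HAB _ (dX0 a b))) _.
      by rewrite lee_fin lerD2r ler_wpM2l // ltW.
    by apply: lt_le_trans LV; rewrite lte_fin /W ltrDl.
  - move=> V x1 x2 VV V1 V2.
    have := le_trans (proj2 (HAB _ (dX0 x1 x2))) (rho_le dX dY f x1 x2).
    rewrite lee_fin => h; have h2 := le_trans h (HS _ _ _ VV V1 V2).
    have h3 : dX x1 x2 / A <= S + B by rewrite -lerBlDr.
    rewrite /T (_ : dX x1 x2 = A * (dX x1 x2 / A)); last by rewrite mulrC divfK // gt_eqF.
    by rewrite ler_wpM2l // ltW.
apply: le_lt_trans H _; rewrite lte_fin /T /S /W.
have -> : A * (C * (A * R0 + B + 1) + D + 1 + B) = A * A * C * R0 + A * (C * (B + 1) + D + 1 + B) by ring.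
by rewrite addrA ltrDl.
Qed.


Lemma lip_fin {X Y : Type} (dX : X -> X -> R) (dY : Y -> Y -> R) (f : X -> Y) :
  is_metric dX -> is_metric dY -> bilipschitz_embedding dX dY f ->
  exists lp, [/\ lip dX dY f = lp%:E, 0 <= lp &
     forall x1 x2, dY (f x1) (f x2) <= lp * dX x1 x2].
Proof.
move=> [dX0 dXe _ _] [dY0 dYe _ _] [A [A1 HA]].
have A0 : 0 < A by apply: lt_le_trans A1.
have pos x1 x2 : x1 <> x2 -> 0 < dX x1 x2.
  move=> ne; rewrite lt_neqAle dX0 andbT; apply/eqP => h; apply: ne.
  by apply/dXe.
have l0 : (0 <= lip dX dY f)%E by apply: ereal_sup_ubound; left.
have lA : (lip dX dY f <= A%:E)%E.
  apply/ereal_supP => y [->|[x1 [x2 [ne ->]]]]; first by rewrite lee_fin ltW.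
  rewrite lee_fin ler_pdivrMr ?pos //.
  have := le_trans (omega_ge dX dY f x1 x2) (proj1 (HA _ (dX0 x1 x2))).
  by rewrite lee_fin mulrC.
have lf : lip dX dY f \is a fin_num.
  by rewrite ge0_fin_numE //; apply: le_lt_trans lA _; rewrite ltry.
exists (fine (lip dX dY f)); split; first by rewrite fineK.
  exact: fine_ge0.
move=> x1 x2; have [->|ne] := pselect (x1 = x2).
  have -> : dY (f x2) (f x2) = 0 by apply/dYe.
  by rewrite mulr_ge0 // fine_ge0.
rewrite -ler_pdivrMr ?pos // -lee_fin fineK //.
by apply: ereal_sup_ubound; right; exists x1, x2.
Qed.

Lemma lipinv_fin {X Y : Type} (dX : X -> X -> R) (dY : Y -> Y -> R) (f : X -> Y) :
  is_metric dX -> is_metric dY -> bilipschitz_embedding dX dY f ->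
  exists li, [/\ lip_inv dX dY f = li%:E, 0 <= li &
     forall x1 x2, dX x1 x2 <= li * dY (f x1) (f x2)].
Proof.
move=> [dX0 dXe _ _] [dY0 dYe _ _] [A [A1 HA]].
have A0 : 0 < A by apply: lt_le_trans A1.
have pos x1 x2 : x1 <> x2 -> 0 < dX x1 x2.
  move=> ne; rewrite lt_neqAle dX0 andbT; apply/eqP => h; apply: ne.
  by apply/dXe.
have key x1 x2 : dX x1 x2 / A <= dY (f x1) (f x2).
  have := le_trans (proj2 (HA _ (dX0 x1 x2))) (rho_le dX dY f x1 x2).
  by rewrite lee_fin.
have posY x1 x2 : x1 <> x2 -> 0 < dY (f x1) (f x2).
  by move=> ne; apply: lt_le_trans (key x1 x2); rewrite divr_gt0 ?pos.
have l0 : (0 <= lip_inv dX dY f)%E by apply: ereal_sup_ubound; left.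
have lA : (lip_inv dX dY f <= A%:E)%E.
  apply/ereal_supP => y [->|[x1 [x2 [ne ->]]]]; first by rewrite lee_fin ltW.
  rewrite lee_fin ler_pdivrMr ?posY // -ler_pdivrMl //.
  by rewrite mulrC key.
have lf : lip_inv dX dY f \is a fin_num.
  by rewrite ge0_fin_numE //; apply: le_lt_trans lA _; rewrite ltry.
exists (fine (lip_inv dX dY f)); split; first by rewrite fineK.
  exact: fine_ge0.
move=> x1 x2; have [->|ne] := pselect (x1 = x2).
  have -> : dX x2 x2 = 0 by apply/dXe.
  by rewrite mulr_ge0 // ?fine_ge0 // dY0.
rewrite -ler_pdivrMr ?posY // -lee_fin fineK //.
by apply: ereal_sup_ubound; right; exists x1, x2.
Qed.


Lemma part3 {X Y : Type} (dX : X -> X -> R) (dY : Y -> Y -> R) (f : X -> Y) (C : R) :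
  is_metric dX -> is_metric dY -> 0 <= C ->
  bilipschitz_embedding dX dY f ->
  (forall R0 : R, 0 <= R0 -> (Delta_c dY R0 <= (C * R0)%:E)%E) ->
  forall R0 : R, 0 <= R0 ->
    (Delta_c dX R0 <= C%:E * distortion dX dY f * R0%:E)%E.
Proof.
move=> mX mY C0 hb hD R0 R00.
have [lp [Hlp lp0 Llp]] := lip_fin _ _ _ mX mY hb.
have [li [Hli li0 Lli]] := lipinv_fin _ _ _ mX mY hb.
rewrite /distortion Hlp Hli -!EFinM.
apply/lee_addgt0Pr => e e0.
set de := e / ((li + 1) * (C + 1)).
have de0 : 0 < de by rewrite divr_gt0 // mulr_gt0 // ltr_pwDr.
have dee : (li + 1) * (C + 1) * de = e.
  by rewrite /de mulrC divfK // gt_eqF // mulr_gt0 // ltr_pwDr.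
set W := lp * R0 + de.
have W0 : 0 <= W by apply: addr_ge0; [exact: mulr_ge0 | exact: ltW].
set S := C * W + de.
have [Vs [cV pV LV dV]] : exists U, [/\ is_cover U, point_finite U,
     (W%:E <= lebesgue_number dY U)%E & (diam_cover dY U < S%:E)%E].
  apply: Delta_lt; apply: le_lt_trans (hD _ W0) _.
  by rewrite lte_fin /S ltrDl.
have HS V a b : Vs V -> V a -> V b -> dY a b <= S.
  by move=> UV Va Vb; apply/ltW; rewrite -lte_fin; exact: (diam_cover_fin _ _ _ dV _ _ _ UV).
have S0 : 0 <= S by apply: addr_ge0; [exact: mulr_ge0 | exact: ltW].
have H : (Delta_c dX R0 <= (li * S)%:E)%E.
  apply: (@pullback _ _ dX dY f Vs R0 (li * S) cV pV R00).
  - exact: mulr_ge0.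
  - move=> E HE; apply: (@le_lt_trans _ _ (lp * R0)%:E).
      apply: diam_le; first exact: mulr_ge0.
      move=> _ _ [a Ea <-] [b Eb <-].
      have hab := ltW (diam_lt _ _ _ _ _ HE Ea Eb).
      by apply: le_trans (Llp a b) _; rewrite ler_wpM2l.
    by apply: lt_le_trans LV; rewrite lte_fin /W ltrDl.
  - move=> V x1 x2 VV V1 V2.
    by apply: le_trans (Lli x1 x2) _; rewrite ler_wpM2l //; exact: HS VV V1 V2.
apply: le_trans H _; rewrite -EFinD lee_fin /S /W.
nra.
Qed.

End Helpers.

Theorem proposition3p9 (R : realType) (X Y : Type)
  (dX : X -> X -> R) (dY : Y -> Y -> R)
  (hX : is_metric dX) (hY : is_metric dY) :
  [/\
   (forall f : X -> Y,
      coarse_stone dY -> coarse_embedding dX dY f -> coarse_stone dX),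
   (forall (f : X -> Y) (C D : R), 0 <= C -> 0 <= D ->
      coarse_lipschitz_embedding dX dY f ->
      (forall R0 : R, 0 <= R0 -> (Delta_c dY R0 <= (C * R0 + D)%:E)%E) ->
      exists C' D' : R, [/\ 0 <= C', 0 <= D' &
        forall R0 : R, 0 <= R0 -> (Delta_c dX R0 < (C' * R0 + D')%:E)%E]) &
   (forall (f : X -> Y) (C : R), 0 <= C ->
      bilipschitz_embedding dX dY f ->
      (forall R0 : R, 0 <= R0 -> (Delta_c dY R0 <= (C * R0)%:E)%E) ->
      forall R0 : R, 0 <= R0 ->
        (Delta_c dX R0 <= C%:E * distortion dX dY f * R0%:E)%E)].
Proof.
split.
- move=> f; exact: part1.
- move=> f C D C0 D0; exact: part2.
- move=> f C C0; exact: part3.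
Qed.
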